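(* Let $$Q_0(x) = x^{q^2+1} + x^{s(\sqrt{2q}+1)} + x^s + 1 \in \mathbb{F}_2[x].$$ Then the set of roots of $Q_0$ (in $E$, equivalently in an algebraic closure of $E$) is exactly $\mathcal{T}_0$.
   Context: Let $q = 2^m$ with $m \ge 3$ odd, so that $\sqrt{2q} = 2^{(m+1)/2}$ is an integer. Let $E = \mathbb{F}_{q^4}$, and put $s = q - \sqrt{2q} + 1$ and $t = q + \sqrt{2q} + 1$. Let $\mathcal{O}_s = \{x \in E \mid x^s = 1\}$ and $\mathcal{O}_t = \{x \in E \mid x^t = 1\}$. Define $$\mathcal{T}_0 = \mathcal{O}_s \cup \left\{\left(v^{q-1} + v^{-(q-1)}\right)^{q-1} uv \;\middle|\; u \in \mathcal{O}_s,\ v \in \mathcal{O}_t \setminus \{1\}\right\}.$$ *)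

(* Defs.v *)
From HB Require Import structures.
From mathcomp Require Import all_boot all_order all_algebra all_field.
Set Implicit Arguments. Unset Strict Implicit. Unset Printing Implicit Defensive.
Import GRing.Theory.
Local Open Scope ring_scope.

Definition qq (m : nat) : nat := (2 ^ m)%N.
(* sqrt(2q) = 2^((m+1)/2)  (an integer when m is odd) *)
Definition sq2q (m : nat) : nat := (2 ^ (m.+1)./2)%N.
Definition ss (m : nat) : nat := (qq m - sq2q m + 1)%N.
Definition tt (m : nat) : nat := (qq m + sq2q m + 1)%N.

(* Q_0(x) = x^(q^2+1) + x^(s(sqrt(2q)+1)) + x^s + 1, with coefficients 0/1,
   viewed over any ring R (for char-2 fields this is the image of the F_2 polynomial). *)
Definition Q0 (R : nzRingType) (m : nat) : {poly R} :=
  'X^((qq m) ^ 2 + 1) + 'X^(ss m * (sq2q m + 1)) + 'X^(ss m) + 1.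

(* membership in T_0 (inside a field F playing the role of E = F_{q^4}):
   O_s union { (v^(q-1) + v^(-(q-1)))^(q-1) u v | u in O_s, v in O_t \ {1} } *)
Definition inT0 (F : fieldType) (m : nat) (x : F) : Prop :=
  x ^+ ss m = 1 \/
  exists u v : F, [/\ u ^+ ss m = 1, v ^+ tt m = 1, v != 1 &
    x = (v ^+ (qq m - 1) + (v ^+ (qq m - 1))^-1) ^+ (qq m - 1) * u * v].

(* Main.v *)
Require Import Defs.
From HB Require Import structures.
From mathcomp Require Import all_boot all_order all_algebra all_field.
Import GRing.Theory.
Local Open Scope ring_scope.
From mathcomp.algebra_tactics Require Import ring.
From mathcomp Require Import zify.


Section Char2.
Variable F : fieldType.
Hypothesis H2 : (2%:R : F) = 0.

Lemma addxx (x : F) : x + x = 0.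
Proof. by rewrite -mulr2n -mulr_natr H2 mulr0. Qed.

Lemma oppc2 (x : F) : - x = x.
Proof. by apply/eqP; rewrite eq_sym -subr_eq0 opprK addxx. Qed.

Lemma frob2 (x y : F) n : (x + y) ^+ (2 ^ n) = x ^+ (2 ^ n) + y ^+ (2 ^ n).
Proof.
elim: n => [|n IH]; first by rewrite expn0 !expr1.
by rewrite expnSr !exprM IH sqrrD -mulr_natr H2 mulr0 addr0.
Qed.

Lemma pow2_1 (c : F) n : c ^+ (2 ^ n) = 1 -> c = 1.
Proof.
move=> h; have : (c + 1) ^+ (2 ^ n) = 0 by rewrite frob2 h expr1n addxx.
move/eqP; rewrite expf_eq0 expn_gt0 /= addr_eq0 => /eqP ->.
by rewrite oppc2.
Qed.

Lemma sq_inj (a b : F) : a ^+ 2 = b ^+ 2 -> a = b.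
Proof.
move=> h; have : (a + b) ^+ (2 ^ 1) = 0 by rewrite frob2 h addxx.
by move/eqP; rewrite expf_eq0 /= addr_eq0 oppc2 => /eqP.
Qed.

Lemma add_eq0 (a b : F) : a + b = 0 -> a = b.
Proof. by move/eqP; rewrite addr_eq0 oppc2 => /eqP. Qed.

End Char2.

Lemma ezr (F : fieldType) (x : F) (n i j c : int) :
  x != 0 -> x ^ n = 1 -> i = j + c * n -> x ^ i = x ^ j.
Proof. by move=> x0 xn ->; rewrite expfzDr // (mulrC c) -exprz_exp xn exp1rz mulr1. Qed.


Lemma PoszX (n k : nat) : Posz (n ^ k)%N = (Posz n) ^+ k.
Proof. by rewrite -!natz natrX. Qed.

Lemma powz (F : fieldType) (y : F) (n : nat) (N j c : int) :
  y != 0 -> y ^ N = 1 -> (n : int) = j + c * N -> y ^+ n = y ^ j.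
Proof. exact: ezr. Qed.

Section Nums.
Variables m k : nat.
Hypothesis Hmk : m = k.*2.+1.

Lemma qqE : qq m = (2 * (2 ^ k * 2 ^ k))%N.
Proof. by rewrite /qq Hmk expnS -expnD addnn. Qed.

Lemma sq2qE : sq2q m = (2 * 2 ^ k)%N.
Proof. by rewrite /sq2q Hmk -doubleS doubleK expnS. Qed.

Lemma r_le_q : (sq2q m <= qq m)%N.
Proof. by rewrite qqE sq2qE leq_mul2l /= leq_pmulr // expn_gt0. Qed.

Definition Hk : int := Posz (2 ^ k)%N.

Lemma Qz : (qq m : int) = 2 * Hk ^+ 2.
Proof. by rewrite qqE !PoszM expr2. Qed.
Lemma Rz : (sq2q m : int) = 2 * Hk.
Proof. by rewrite sq2qE PoszM. Qed.
Lemma Tz : (tt m : int) = 2 * Hk ^+ 2 + 2 * Hk + 1.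
Proof. by rewrite /tt !PoszD -Qz -Rz. Qed.
Lemma Sz : (ss m : int) = 2 * Hk ^+ 2 - 2 * Hk + 1.
Proof. by rewrite /ss PoszD -subzn ?r_le_q // -Qz -Rz. Qed.

End Nums.


Lemma Posz1 : Posz 1 = 1. Proof. by []. Qed.

Section Root.
Variable F : fieldType.
Hypothesis H2 : (2%:R : F) = 0.
Variables m k : nat.
Hypothesis Hmk : m = k.*2.+1.
Variable v : F.
Hypothesis vt : v ^+ tt m = 1.
Hypothesis v1 : v != 1.

Let Q : int := qq m.
Let R : int := sq2q m.
Let T : int := tt m.
Let S : int := ss m.

Lemma v0 : v != 0.
Proof. by apply: contra_eq_neq vt => ->; rewrite expr0n /tt addn1 eq_sym oner_neq0. Qed.

Lemma vT : v ^ T = 1. Proof. exact: vt. Qed.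

Definition e (i : int) := v ^ i.

Lemma eC (i j c : int) : i = j + c * T -> e i = e j.
Proof. exact: ezr v0 vT. Qed.

Lemma eA (i j : int) : e (i + j) = e i * e j.
Proof. exact: expfzDr v0. Qed.

Lemma eV (i : int) : (e i)^-1 = e (- i).
Proof. exact: invr_expz. Qed.

Lemma efrob (a b : int) n : (e a + e b) ^+ (2 ^ n) = e (a * (2 ^ n)%N) + e (b * (2 ^ n)%N).
Proof. by rewrite frob2 // /e -!exprz_exp. Qed.

Ltac cong cc := apply: (@eC _ _ (cc : int)); rewrite /T /Q /R (@Tz m k Hmk) ?(@Qz m k Hmk) ?(@Rz m k Hmk); ring.

Definition D := e (R + 2) + e (- (R + 2)).
Definition N := e R + e (- R).

Lemma w_eq : v ^+ (qq m - 1) + (v ^+ (qq m - 1))^-1 = D.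
Proof.
have -> : v ^+ (qq m - 1) = e (- (R + 2)).
  rewrite exprnP -subzn; last by rewrite /qq expn_gt0.
  cong (1:int).
by rewrite eV opprK addrC.
Qed.

Lemma Dq : D ^+ qq m = N.
Proof.
rewrite /D /qq efrob -/(qq m) addrC /N; congr (_ + _).
- by cong (- R).
- by cong R.
Qed.


Lemma Nq : N ^+ qq m = D.
Proof.
rewrite /N /qq efrob -/(qq m) /D; congr (_ + _).
- by cong (R - 2).
- by cong (2 - R).
Qed.

Lemma D0 : D != 0.
Proof.
apply/negP => /eqP /(@add_eq0 _ H2) h.
have h1 : e (Hk k + 1) = 1.
  apply: (@pow2_1 _ H2 _ 2).
  rewrite exprnP /e exprz_exp -/(e _).
  have -> : e ((Hk k + 1) * (2^2)%N) = e (R + 2) * e (R + 2)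
    by rewrite -eA; cong (0:int).
  by rewrite {2}h -eA addrN /e expr0z.
have : e 1 = e T.
  apply: (@ezr _ v (Hk k + 1) 1 T (- (2 * Hk k)) v0 h1).
  rewrite /T (@Tz m k Hmk); ring.
by rewrite /e vT expr1z => /eqP; apply/negP.
Qed.

Lemma N0 : N != 0.
Proof. by rewrite -Dq expf_neq0 // D0. Qed.

Definition W := D ^+ (qq m - 1).

Lemma WE : W = N / D.
Proof.
have hq : qq m = (qq m - 1).+1 by rewrite subn1 prednK // /qq expn_gt0.
by rewrite /W -Dq {2}hq exprSr mulfK // D0.
Qed.

Lemma W0 : W != 0.
Proof. by rewrite WE mulf_neq0 ?invr_eq0 ?N0 ?D0. Qed.

Lemma Wq : W ^+ (qq m).+1 = 1.
Proof.
rewrite exprSr {1}WE expr_div_n Dq Nq WE mulrA divfK ?N0 // divff //; exact: D0.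
Qed.

Lemma WZ : W ^ (Q + 1) = 1.
Proof. rewrite (_ : Q + 1 = (qq m).+1%N); first exact: Wq. by rewrite /Q -addn1 PoszD. Qed.

Definition P := e R.


Lemma P0 : P != 0.
Proof. by rewrite /P /e expfz_neq0 // v0. Qed.

Lemma e2R : e (2 * R) = P ^+ 2.
Proof. by rewrite (_ : 2 * R = R + R) ?eA ?expr2 //; ring. Qed.
Lemma e2R4 : e (2 * R + 4) = P ^+ 2 * v ^+ 4.
Proof. by rewrite eA e2R. Qed.
Lemma e2R2 : e (2 * R + 2) = P ^+ 2 * v ^+ 2.
Proof. by rewrite eA e2R. Qed.


Lemma N2 : N ^+ 2 = e (2 * R) + e (- (2 * R)).
Proof. by rewrite (_ : 2%N = 2 ^ 1)%N // /N efrob; congr (_ + _); cong (0:int). Qed.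
Lemma D2 : D ^+ 2 = e (2 * R + 4) + e (- (2 * R + 4)).
Proof. by rewrite (_ : 2%N = 2 ^ 1)%N // /D efrob; congr (_ + _); cong (0:int). Qed.
Lemma Nr : N ^+ sq2q m = e (- (2 * R + 2)) + e (2 * R + 2).
Proof. by rewrite /N /sq2q efrob -/(sq2q m); congr (_ + _); [cong (2 : int) | cong (-2:int)]. Qed.
Lemma Dr : D ^+ sq2q m = e (- 2) + e 2.
Proof. by rewrite /D /sq2q efrob -/(sq2q m); congr (_ + _); [cong (2:int) | cong (-2:int)]. Qed.

Ltac arith := rewrite /Q /S /T /R ?PoszM ?(@Sz m k Hmk) ?(@Tz m k Hmk) ?(@Qz m k Hmk) ?(@Rz m k Hmk) ?PoszD ?(PoszX (qq m) 2) ?Posz1 ?(@Qz m k Hmk) ?(@Rz m k Hmk); ring.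

Lemma root_main (u : F) : u ^+ ss m = 1 -> root (Q0 F m) (W * u * v).
Proof.
move=> us.
have u0 : u != 0.
  by apply: contra_eq_neq us => ->; rewrite expr0n /ss addn1 eq_sym oner_neq0.
have uS : u ^ S = 1 by exact: us.
have X1 : (W * u * v) ^+ (qq m ^ 2 + 1) = W ^+ 2.
  rewrite !exprMn (@powz _ W _ (Q + 1) 2 (Q - 1) W0 WZ); last by arith.
  rewrite (@powz _ u _ S 0 T u0 uS); last by arith.
  rewrite (@powz _ v _ T 0 S v0 vT); last by arith.
  by rewrite !expr0z !mulr1.
have X2 : (W * u * v) ^+ (ss m * (sq2q m + 1)) = W ^ (2 - R) * e (2 * R + 4).
  rewrite !exprMn (@powz _ W _ (Q + 1) (2 - R) (R - 1) W0 WZ); last by arith.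
  rewrite (@powz _ u _ S 0 (R + 1) u0 uS); last by arith.
  rewrite (@powz _ v _ T (2 * R + 4) (R - 3) v0 vT); last by arith.
  by rewrite !expr0z !mulr1.
have X3 : (W * u * v) ^+ ss m = W ^ (- R) * e (- (2 * R)).
  rewrite !exprMn (@powz _ W _ (Q + 1) (- R) 1 W0 WZ); last by arith.
  rewrite (@powz _ u _ S 0 1 u0 uS); last by arith.
  rewrite (@powz _ v _ T (- (2 * R)) 1 v0 vT); last by arith.
  by rewrite !expr0z !mulr1.
rewrite /root /Q0 !hornerE X1 X2 X3.
rewrite (expfzDr 2 (- R) W0) -invr_expz.
change (W ^ R) with (W ^+ sq2q m); change (W ^ 2) with (W ^+ 2).
rewrite WE !expr_div_n N2 D2 Nr Dr -!eV e2R e2R4 e2R2.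
change (e 2) with (v ^+ 2).
have v0' := v0; have P0' := P0.
apply/eqP.
pose K := P ^+ 4 * v ^+ 2 + 2%:R * v ^+ 2 + (v ^+ 2)^-1 + (P ^+ 4 * v ^+ 2)^-1 + P ^+ 4 * v ^+ 6 + v ^+ 6 + (P ^+ 4 * v ^+ 6)^-1.
transitivity (2%:R * (K / ((P ^+ 2 * v ^+ 4 + (P ^+ 2 * v ^+ 4)^-1) * (P ^+ 2 * v ^+ 2 + (P ^+ 2 * v ^+ 2)^-1)))); last by rewrite H2 mul0r.
rewrite /K; field.
have aux : forall a : F, a != 0 -> a + a^-1 != 0 -> a * a + 1 != 0.
  move=> a a0 h; rewrite (_ : a * a + 1 = a * (a + a^-1)) ?mulf_neq0 //.
  by rewrite mulrDr mulfV.
have hD : (P ^+ 2 * v ^+ 4) * (P ^+ 2 * v ^+ 4) + 1 != 0.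
  apply: aux; first by rewrite mulf_neq0 ?expf_neq0.
  by rewrite -e2R4 eV -D2 expf_neq0 // D0.
have hM : (P ^+ 2 * v ^+ 2) * (P ^+ 2 * v ^+ 2) + 1 != 0.
  apply: aux; first by rewrite mulf_neq0 ?expf_neq0.
  by rewrite -e2R2 eV addrC -Nr expf_neq0 // N0.
have hC : v ^+ 2 * v ^+ 2 + 1 != 0.
  apply: aux; first by rewrite expf_neq0.
  by change (v ^+ 2) with (e 2); rewrite eV addrC -Dr expf_neq0 // D0.
have -> : (P * v * (P * v)) ^+ 2 + 1 = (P ^+ 2 * v ^+ 2) * (P ^+ 2 * v ^+ 2) + 1 by ring.
have -> : 1 + (v * v) ^+ 2 = v ^+ 2 * v ^+ 2 + 1 by ring.
by rewrite v0' P0' hD hM hC.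
Qed.


Lemma conj_main (u : F) : u ^+ ss m = 1 ->
  (W * u * v) ^+ (qq m ^ 2) * (u * v) ^+ 2 = W * u * v.
Proof.
move=> us.
have u0 : u != 0.
  by apply: contra_eq_neq us => ->; rewrite expr0n /ss addn1 eq_sym oner_neq0.
have uS : u ^ S = 1 by exact: us.
rewrite !exprMn (@powz _ W _ (Q + 1) 1 (Q - 1) W0 WZ); last by arith.
rewrite (@powz _ u _ S (-1) T u0 uS); last by arith.
rewrite (@powz _ v _ T (-1) S v0 vT); last by arith.
rewrite expr1z !exprN1.
have v0' := v0; have W0' := W0.
by field; rewrite v0' u0.
Qed.

Lemma x_neq0 (u : F) : u ^+ ss m = 1 -> W * u * v != 0.
Proof.
move=> us.
have u0 : u != 0.
  by apply: contra_eq_neq us => ->; rewrite expr0n /ss addn1 eq_sym oner_neq0.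
by rewrite !mulf_neq0 ?W0 ?v0.
Qed.

End Root.

Section Os.
Variable F : fieldType.
Hypothesis H2 : (2%:R : F) = 0.
Variables m k : nat.
Hypothesis Hmk : m = k.*2.+1.

Let Q : int := qq m.
Let R : int := sq2q m.
Let T : int := tt m.
Let S : int := ss m.

Ltac arith := rewrite /Q /S /T /R ?PoszM ?(@Sz m k Hmk) ?(@Tz m k Hmk) ?(@Qz m k Hmk) ?(@Rz m k Hmk) ?PoszD ?(PoszX (qq m) 2) ?Posz1 ?(@Qz m k Hmk) ?(@Rz m k Hmk); ring.

Variable u : F.
Hypothesis us : u ^+ ss m = 1.

Lemma u0 : u != 0.
Proof. by apply: contra_eq_neq us => ->; rewrite expr0n /ss addn1 eq_sym oner_neq0. Qed.

Lemma root_u : root (Q0 F m) u.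
Proof.
have uS : u ^ S = 1 by exact: us.
rewrite /root /Q0 !hornerE.
rewrite (@powz _ u _ S 0 T u0 uS); last by arith.
rewrite (@powz _ u _ S 0 (R + 1) u0 uS); last by arith.
by rewrite us expr0z (@addxx _ H2) add0r (@addxx _ H2).
Qed.

Lemma conj_u : u ^+ (qq m ^ 2) * (u * 1) ^+ 2 = u.
Proof.
have uS : u ^ S = 1 by exact: us.
rewrite (@powz _ u _ S (-1) T u0 uS); last by arith.
rewrite exprN1 mulr1 expr2 mulrA mulVf ?mul1r //; exact: u0.
Qed.

Lemma st_1 (c : F) : c ^+ ss m = 1 -> c ^+ tt m = 1 -> c = 1.
Proof.
move=> cs ct.
have c0 : c != 0.
  by apply: contra_eq_neq cs => ->; rewrite expr0n /ss addn1 eq_sym oner_neq0.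
apply: (@pow2_1 _ H2 _ k.+2).
rewrite (@powz _ c _ T (- S) 1 c0 ct); last first.
  by rewrite !expnS !PoszM /Hk; arith.
by rewrite -invr_expz; change (c ^ S) with (c ^+ ss m); rewrite cs invr1.
Qed.

End Os.




Import Order.TTheory Num.Theory.


Lemma inT0_root (F : fieldType) (H2 : (2%:R : F) = 0) m k (Hmk : m = k.*2.+1)
  (x : F) : inT0 m x -> root (Q0 F m) x.
Proof.
case=> [us | [u [v [us vt v1 ->]]]]; first exact: (@root_u _ H2 _ _ Hmk _ us).
rewrite (@w_eq _ _ _ Hmk _ vt).
exact: (@root_main _ H2 _ _ Hmk _ vt v1 _ us).
Qed.

Lemma size_Q0 (F : fieldType) m k (Hmk : m = k.*2.+1) :
  size (Q0 F m) = (qq m ^ 2 + 1).+1.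
Proof.
have hb : (ss m * (sq2q m + 1) < qq m ^ 2 + 1)%N.
  rewrite -(ltz_nat) !PoszM (@Sz m k Hmk) !PoszD (PoszX (qq m) 2) (@Qz m k Hmk) (@Rz m k Hmk) Posz1.
  have h1 : (1 <= Hk k)%R by rewrite /Hk lez_nat expn_gt0.
  rewrite -subr_gt0.
  have -> : (2 * Hk k ^+ 2) ^+ 2 + 1 - (2 * Hk k ^+ 2 - 2 * Hk k + 1) * (2 * Hk k + 1)
     = 2 * Hk k ^+ 2 * (2 * (Hk k - 1) ^+ 2 + 2 * (Hk k - 1) + 1) by ring.
  apply: mulr_gt0; first by apply: mulr_gt0 => //; apply: exprn_gt0; apply: lt_le_trans h1.
  apply: ltr_wpDl; last by [].
  apply: addr_ge0; apply: mulr_ge0 => //; last by rewrite subr_ge0.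
  exact: sqr_ge0.
have hc : (ss m <= ss m * (sq2q m + 1))%N by rewrite leq_pmulr // addn1.
rewrite /Q0 -!addrA size_addl size_polyXn //.
rewrite (leq_ltn_trans (size_add _ _)) // gtn_max size_polyXn ltnS hb /=.
rewrite (leq_ltn_trans (size_add _ _)) // gtn_max size_polyXn size_poly1 /=.
by rewrite !ltnS (leq_ltn_trans hc hb) ltn_addl.
Qed.

Theorem theorem4p4 (m : nat) (Hm : (3 <= m)%N) (Hodd : odd m)
  (F : finFieldType) (HF : #|F| = (qq m ^ 4)%N) :
  (forall x : F, root (Q0 F m) x <-> inT0 m x) /\
  (forall (L : fieldExtType F) (y : L),
     root (Q0 L m) y -> exists x : F, inT0 m x /\ y = x%:A).
Proof.
have H2 : (2%:R : F) = 0.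
  apply: pcharf0; apply: (@card_finPcharP _ _ (m * 4)) => //.
  by rewrite HF /qq expnM.
set k := m./2.
have Hmk : m = k.*2.+1 by rewrite -[m in LHS]odd_double_half Hodd.
have q0 : (0 < qq m)%N by rewrite /qq expn_gt0.
set n := #|F|.-1.
have cF : #|F| = n.+1 by rewrite prednK // HF expn_gt0 q0.
have hn : n = (ss m * (tt m * (qq m ^ 2 - 1)))%N.
  apply/eqP; rewrite -eqz_nat; apply/eqP.
  rewrite /n HF -subn1 -subzn ?expn_gt0 ?q0 // !PoszM (@Sz m k Hmk) (@Tz m k Hmk).
  rewrite -subzn ?expn_gt0 ?q0 // (PoszX (qq m) 2) !(@Qz m k Hmk) Posz1; ring.
have n0 : (0 < n)%N.
  rewrite hn !muln_gt0 /ss /tt !addn1 /= subn_gt0.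
  by rewrite /qq -expnM -{1}(expn0 2) ltn_exp2l // muln_gt0 Hmk.
have [g _ gP] : exists2 g, g \in enum (predC1 (0 : F)) & n.-primitive_root g.
  apply/hasP; apply: cyclic.has_prim_root => //.
  - apply/allP => x; rewrite mem_enum /= => x0.
    rewrite unity_rootE; apply/eqP; apply: (mulIf x0).
    by rewrite mul1r -exprSr -cF expf_card.
  - exact: enum_uniq.
  - by rewrite -cardE cardC1.
have hs : (ss m %| n)%N by rewrite hn dvdn_mulr.
have zsP := dvdn_prim_root gP hs.
have ht : (tt m %| n)%N by rewrite hn mulnCA dvdn_mulr.
have ztP := dvdn_prim_root gP ht.
set zs := g ^+ (n %/ ss m) in zsP.
set zt := g ^+ (n %/ tt m) in ztP.
pose uu (i : 'I_(ss m)) := zs ^+ i.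
pose vv (j : 'I_(tt m)) := zt ^+ j.
pose f (p : 'I_(ss m) * 'I_(tt m)) :=
  if (p.2 : nat) == 0%N then uu p.1 else W F m (vv p.2) * uu p.1 * vv p.2.
have huu i : uu i ^+ ss m = 1 by rewrite /uu exprAC (prim_expr_order zsP) expr1n.
have hvv j : vv j ^+ tt m = 1 by rewrite /vv exprAC (prim_expr_order ztP) expr1n.
have hv1 (j : 'I_(tt m)) : (j : nat) != 0%N -> vv j != 1.
  apply: contra; rewrite /vv -(expr0 zt) (eq_prim_root_expr ztP) mod0n modn_small //.
have uu0 i : uu i != 0.
  by apply: contra_eq_neq (huu i) => ->; rewrite expr0n /ss addn1 eq_sym oner_neq0.
have vv0 j : vv j != 0.
  by apply: contra_eq_neq (hvv j) => ->; rewrite expr0n /tt addn1 eq_sym oner_neq0.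
have hf_in p : inT0 m (f p).
  rewrite /f; case: ifP => hj; first by left; exact: huu.
  right; exists (uu p.1), (vv p.2); split => //; first by rewrite hv1 ?hj.
  by rewrite (@w_eq _ _ _ Hmk _ (hvv p.2)).
have hf_root p : root (Q0 F m) (f p) by apply: (@inT0_root _ H2 _ _ Hmk).
have hconj i j : f (i, j) ^+ (qq m ^ 2) * (uu i * vv j) ^+ 2 = f (i, j).
  rewrite /f /=; case: ifP => hj.
    by rewrite /vv (eqP hj) expr0; exact: (@conj_u _ _ _ Hmk _ (huu i)).
  exact: (@conj_main _ H2 _ _ Hmk _ (hvv j) (hv1 j (negbT hj))).
have hf0 p : f p != 0.
  rewrite /f; case: ifP => hj; first exact: uu0.
  exact: (@x_neq0 _ H2 _ _ Hmk _ (hvv p.2) (hv1 p.2 (negbT hj))).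
have finj : injective f.
  move=> [i j] [i' j'] h.
  have h1 : (uu i * vv j) ^+ 2 = (uu i' * vv j') ^+ 2.
    apply: (mulfI (expf_neq0 (qq m ^ 2) (hf0 (i, j)))).
    by rewrite (hconj i j) h (hconj i' j').
  have h2 := @sq_inj _ H2 _ _ h1.
  have h3 : uu i / uu i' = vv j' / vv j.
    by apply/eqP; rewrite eqr_div ?uu0 ?vv0 // h2 mulrC.
  have hc : uu i / uu i' = 1.
    apply: (@st_1 _ H2 _ _ Hmk).
      by rewrite expr_div_n !huu divr1.
    by rewrite h3 expr_div_n !hvv divr1.
  have hu : uu i = uu i' by rewrite -[uu i](divfK (uu0 i')) hc mul1r.
  have hv : vv j = vv j' by apply: (mulfI (uu0 i)); rewrite h2 hu.
  have -> : i = i'.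
    by apply/val_inj; move/eqP: hu; rewrite (eq_prim_root_expr zsP) !modn_small // => /eqP.
  have -> : j = j'.
    by apply/val_inj; move/eqP: hv; rewrite (eq_prim_root_expr ztP) !modn_small // => /eqP.
  by [].
pose rs := [seq f p | p <- enum {: 'I_(ss m) * 'I_(tt m)}].
have hall : all (root (Q0 F m)) rs by apply/allP => x /mapP [p _ ->].
have huniq : uniq_roots rs by rewrite uniq_rootsE map_inj_uniq // enum_uniq.
have [c Hc] := uniq_roots_prod_XsubC hall huniq.
have hst : (ss m * tt m = qq m ^ 2 + 1)%N.
  apply/eqP; rewrite -eqz_nat; apply/eqP.
  rewrite PoszM (@Sz m k Hmk) (@Tz m k Hmk) PoszD (PoszX (qq m) 2) (@Qz m k Hmk) Posz1; ring.
have szrs : size rs = (qq m ^ 2 + 1)%N.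
  by rewrite size_map -cardE card_prod !card_ord hst.
have szP : size (\prod_(z <- rs) ('X - z%:P)) = (qq m ^ 2 + 1).+1.
  by rewrite size_prod_XsubC szrs.
have c0 : c != 0.
  apply: contra_eq_neq (@size_Q0 F m k Hmk) => c0.
  by rewrite Hc c0 mul0r size_poly0.
have Pn0 : \prod_(z <- rs) ('X - z%:P) != 0 by rewrite -size_poly_eq0 szP.
have : size c == 1%N.
  move: (@size_Q0 F m k Hmk); rewrite Hc size_mul // szP.
  rewrite addnS /=; move: (size c) (qq m ^ 2 + 1)%N => a b h; apply/eqP; lia.
case/size_poly1P => c1 c1n Ec.
rewrite Ec in Hc.
split.
  move=> x; split; last exact: (@inT0_root _ H2 _ _ Hmk).
  rewrite Hc rootM rootC (negbTE c1n) /= root_prod_XsubC => /mapP [p _ ->].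
  exact: hf_in.
move=> L y.
have -> : Q0 L m = map_poly (in_alg L) (Q0 F m).
  by rewrite /Q0 !rmorphD /= !map_polyXn rmorph1.
rewrite Hc rmorphM /= map_polyC map_prod_XsubC rootM rootC fmorph_eq0 (negbTE c1n) /=.
rewrite -(big_map (in_alg L) xpredT (fun a => 'X - a%:P)) root_prod_XsubC.
case/mapP => x /mapP [p _ ->] ->.
by exists (f p); split; [exact: hf_in | rewrite in_algE].
Qed.
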